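(* For every finite simple undirected graph $G$, the graph $\mathsf{TJ}_{\omega(G)}(G)$ does not contain a diamond ($K_4$ minus one edge) as an induced subgraph.
   Context: $\omega(G)$ is the maximum size of a clique of $G$. $\mathsf{TJ}_k(G)$ is the graph whose vertices are the cliques of $G$ of size $k$, two such cliques $C, C'$ being adjacent iff $|C \setminus C'| = |C' \setminus C| = 1$. *)

(* Defs.v *)
From mathcomp Require Import all_boot.
Set Implicit Arguments. Unset Strict Implicit. Unset Printing Implicit Defensive.

Definition simple_graph (T : finType) (e : rel T) : Prop :=
  symmetric e /\ irreflexive e.

Definition is_clique (T : finType) (e : rel T) (A : {set T}) : bool :=
  [forall x in A, forall y in A, (x != y) ==> e x y].

Definition clique_number (T : finType) (e : rel T) : nat :=
  \max_(A : {set T} | is_clique e A) #|A|.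

Definition TJ_vertex (T : finType) (e : rel T) (k : nat) (C : {set T}) : bool :=
  is_clique e C && (#|C| == k).

Definition TJ_adj (T : finType) (C C' : {set T}) : bool :=
  (#|C :\: C'| == 1) && (#|C' :\: C| == 1).

Definition TJ_induced_diamond (T : finType) (e : rel T) (k : nat)
    (a b c d : {set T}) : Prop :=
  [/\ [&& TJ_vertex e k a, TJ_vertex e k b, TJ_vertex e k c & TJ_vertex e k d],
      uniq [:: a; b; c; d],
      [&& TJ_adj a b, TJ_adj a c, TJ_adj a d, TJ_adj b c & TJ_adj b d]
    & ~~ TJ_adj c d].

(* Main.v *)
Require Import Defs.
From mathcomp Require Import all_boot.
From mathcomp Require Import zify.

Section Aux.
Variables (T : finType) (e : rel T).
Hypothesis He : simple_graph e.

Lemma clique_le (A : {set T}) : is_clique e A -> #|A| <= clique_number e.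
Proof. move=> H; rewrite /clique_number; exact: (@leq_bigmax_cond _ (is_clique e) (fun A : {set T} => #|A|) A H). Qed.

Lemma cliqueP (A : {set T}) :
  reflect (forall x y, x \in A -> y \in A -> x != y -> e x y) (is_clique e A).
Proof.
apply: (iffP forallP) => [H x y xA yA nxy | H x].
  by move: (H x); rewrite xA /= => /forallP/(_ y); rewrite yA nxy.
apply/implyP=> xA; apply/forallP=> y; apply/implyP=> yA; apply/implyP.
exact: H.
Qed.

Lemma adj_nonedge (a b : {set T}) x y :
  is_clique e a -> is_clique e b -> #|a| = clique_number e ->
  #|b| = clique_number e ->
  a :\: b = [set x] -> b :\: a = [set y] -> ~~ e x y.
Proof.
case: He => sym irr.
move=> /cliqueP ca /cliqueP cb ha hb hab hba; apply/negP => exy.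
have xa : forall u, u \in a -> u \notin b -> u = x.
  by move=> u ua ub; apply/set1P; rewrite -hab inE ua ub.
have yb : forall u, u \in b -> u \notin a -> u = y.
  by move=> u ub ua; apply/set1P; rewrite -hba inE ua ub.
have cU : is_clique e (a :|: b).
  apply/cliqueP => u v; rewrite !inE => /orP[ua|ub] /orP[va|vb] nuv.
  - exact: ca.
  - case ub: (u \in b); first by apply: cb.
    case va: (v \in a); first by apply: ca.
    by rewrite (xa u ua (negbT ub)) (yb v vb (negbT va)).
  - case vb': (v \in b); first by apply: cb.
    case ua': (u \in a); first by apply: ca.
    by rewrite (xa v va (negbT vb')) (yb u ub (negbT ua')) sym.
  - exact: cb.
have := clique_le _ cU.
have h1 := cardsUI a b. have h2 := cardsID b a.
rewrite hab cards1 in h2. lia.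
Qed.

Lemma inter_sub (a b c : {set T}) :
  is_clique e a -> is_clique e b -> is_clique e c ->
  #|a| = clique_number e -> #|b| = clique_number e ->
  TJ_adj a b -> TJ_adj a c -> TJ_adj b c -> a :&: b \subset c.
Proof.
move=> ca cb cc ha hb /andP[/cards1P[x hab] /cards1P[y hba]]
  /andP[/cards1P[u hac] _] /andP[/cards1P[v hbc] _].
have nxy := @adj_nonedge a b x y ca cb ha hb hab hba.
apply/subsetP => s; rewrite inE => /andP[sa sb]; apply/negPn/negP => sc.
have su : s = u by apply/set1P; rewrite -hac inE sa sc.
have sv : s = v by apply/set1P; rewrite -hbc inE sb sc.
have xab : x \in a :\: b by rewrite hab set11.
have yba : y \in b :\: a by rewrite hba set11.
move: xab yba; rewrite !inE => /andP[xb xa] /andP[ya yb].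
have xc : x \in c.
  apply/negPn/negP => xc.
  have : x \in a :\: c by rewrite inE xc xa.
  by rewrite hac -su => /set1P ex; move: xb; rewrite ex sb.
have yc : y \in c.
  apply/negPn/negP => yc.
  have : y \in b :\: c by rewrite inE yc yb.
  by rewrite hbc -sv => /set1P ey; move: ya; rewrite ey sa.
have nexy : x != y by apply/eqP => exy; move: ya; rewrite -exy xa.
by move/cliqueP: cc => /(_ x y xc yc nexy); rewrite (negbTE nxy).
Qed.

End Aux.

Lemma arith (i x y ab cc dd k : nat) : i + y = dd -> i + x = cc -> cc = k ->
  dd = k -> ab <= i -> ab + 1 = k -> x != 0 -> (x <> 1 \/ y <> 1) -> False.
Proof. move=> *; lia. Qed.

Theorem proposition4p3 (T : finType) (e : rel T) :
  simple_graph e ->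
  forall a b c d : {set T},
    ~ TJ_induced_diamond e (clique_number e) a b c d.
Proof.
move=> He a b c d [].
rewrite /TJ_vertex => /and4P[/andP[ca /eqP ha] /andP[cb /eqP hb]
  /andP[cc /eqP hc] /andP[cd /eqP hd]] uq /and5P[ab ac ad bc bd] ncd.
have sc := @inter_sub T e He a b _ ca cb cc ha hb ab ac bc.
have sd := @inter_sub T e He a b _ ca cb cd ha hb ab ad bd.
have kab : #|a :&: b| + 1 = clique_number e.
  have := cardsID b a; case/andP: ab => /eqP -> _; by rewrite ha.
have scd : a :&: b \subset c :&: d by rewrite subsetI sc sd.
have le := subset_leq_card scd.
have h1 := cardsID d c. have h2 := cardsID c d.
rewrite setIC in h2.
have ncd' : c != d by apply/eqP => E; move: uq; rewrite E /= !inE eqxx /= !andbF.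
have : #|c :\: d| != 0.
  apply/negP => /eqP h0.
  move: ncd'; rewrite eqEcard; case/nandP.
  - by move/negP; apply; rewrite -setD_eq0 -cards_eq0 h0.
  - by rewrite hc hd leqnn.
move=> nz; move: ncd; rewrite /TJ_adj negb_and => /orP[] /eqP H.
  exact: (@arith _ _ _ _ _ _ _ h2 h1 hc hd le kab nz (or_introl H)).
exact: (@arith _ _ _ _ _ _ _ h2 h1 hc hd le kab nz (or_intror H)).
Qed.
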